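(* There is a function $\Gamma:\mathbb R\to\mathbb R$ such that for every $t\in\mathbb R$, $$\lim_{n\to\infty}\frac1n\log\mathbb{E}\big(e^{tH_n}\big)=\Gamma(t).$$
   Context: Standing setup (discrete-time Hawkes process, DTHP). Let $(a_i)_{i=0}^\infty$ be a sequence of strictly positive real numbers with $\sum_{i=0}^\infty a_i<1$ and $\sum_{i=1}^\infty i\,a_i<\infty$. The arrival process $\{\xi_n\}_{n\ge1}$ is a sequence of $\{0,1\}$-valued random variables on a probability space $(\Omega,\mathcal F,\mathbb P)$ with $\mathbb{P}(\xi_1=1)=a_0$, $\mathbb P(\xi_1=0)=1-a_0$, and for $n\ge2$, $$\mathbb{P}(\xi_n=1\mid \xi_1,\dots,\xi_{n-1})=a_0+\sum_{i=1}^{n-1}a_{n-i}\xi_i,\qquad \mathbb{P}(\xi_n=0\mid \xi_1,\dots,\xi_{n-1})=1-\Big(a_0+\sum_{i=1}^{n-1}a_{n-i}\xi_i\Big).$$ The DTHP is $H_n=\sum_{i=1}^n\xi_i$, and $\mathcal F_n=\sigma(\xi_1,\dots,\xi_n)$. *)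

(* Defs.v *)
From HB Require Import structures.
From mathcomp Require Import all_boot all_order all_algebra.
From mathcomp Require Import all_classical all_reals all_analysis.
Set Implicit Arguments. Unset Strict Implicit. Unset Printing Implicit Defensive.
Import Order.TTheory GRing.Theory Num.Theory numFieldNormedType.Exports.
Local Open Scope classical_set_scope.
Local Open Scope ring_scope.

Definition dthp_kernel (R : realType) (a : nat -> R) : Prop :=
  (forall i, 0 < a i) /\
  cvg (series a @ \oo) /\ limn (series a) < 1 /\
  cvg (series (fun i => i%:R * a i) @ \oo).

(* Conditional intensity of xi_{n+1} given (xi_1,...,xi_n) = x
   (x : seq bool of size n, entry j (0-based) is the value of xi_{j+1}):
   a_0 + sum_{i=1}^n a_{n+1-i} xi_i. *)
Definition intensity (R : realType) (a : nat -> R) (n : nat) (x : seq bool) : R :=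
  a 0%N + \sum_(j < n) a (n - j)%N * (nth false x j)%:R.

(* The cylinder event {xi_1 = x_1, ..., xi_n = x_n}; the process is indexed
   from 1 as in the paper (xi 0 is unused). *)
Definition cyl (T : Type) (R : realType) (xi : nat -> T -> R) (n : nat)
  (x : seq bool) : set T :=
  [set w | forall j, (j < n)%N -> xi j.+1 w = (nth false x j)%:R].

(* xi is a DTHP with kernel a on the probability space P: each xi_n
   (n >= 1) is a measurable {0,1}-valued random variable, and for every
   n and every (x_1,...,x_n,b) in {0,1}^{n+1},
   P(xi_1=x_1,..,xi_n=x_n, xi_{n+1}=b)
     = P(xi_1=x_1,..,xi_n=x_n) * P(xi_{n+1}=b | xi_1=x_1,..,xi_n=x_n)
   with the prescribed conditional probabilities (for n = 0 this reads
   P(xi_1 = 1) = a_0, P(xi_1 = 0) = 1 - a_0). *)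
Definition is_DTHP (d : measure_display) (T : measurableType d) (R : realType)
  (P : probability T R) (a : nat -> R) (xi : nat -> T -> R) : Prop :=
  (forall n, (0 < n)%N -> measurable_fun setT (xi n)) /\
  (forall n w, (0 < n)%N -> xi n w = 0 \/ xi n w = 1) /\
  (forall n (x : seq bool) (b : bool), size x = n ->
     P (cyl xi n.+1 (rcons x b)) =
     (P (cyl xi n x) *
      (if b then intensity a n x else 1 - intensity a n x)%:E)%E).

Definition H (T : Type) (R : realType) (xi : nat -> T -> R) (n : nat) : T -> R :=
  fun w => \sum_(1 <= i < n.+1) xi i w.

(* Main.v *)
Require Import Defs.
From HB Require Import structures.
From mathcomp Require Import all_boot all_order all_algebra.
From mathcomp Require Import all_classical all_reals all_analysis.
From mathcomp Require Import lra ring.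
Import Order.TTheory GRing.Theory Num.Theory numFieldNormedType.Exports.
Local Open Scope classical_set_scope.
Local Open Scope ring_scope.
Set Implicit Arguments. Unset Strict Implicit.
Definition shiftc (R : realType) (a : nat -> R) (b : bool) (c : nat -> R) : nat -> R :=
  fun k => c k.+1 + (if b then a k.+1 else 0).

Fixpoint V (R : realType) (a : nat -> R) (c : nat -> R) (m : nat) (g : seq bool -> R) : R :=
  match m with
  | 0 => g [::]
  | m'.+1 => (1 - (a 0%N + c 0%N)) * V a (shiftc a false c) m' (fun y => g (false :: y))
             + (a 0%N + c 0%N) * V a (shiftc a true c) m' (fun y => g (true :: y))
  end.

Fixpoint st (R : realType) (a : nat -> R) (c : nat -> R) (x : seq bool) : nat -> R :=
  match x with [::] => c | b :: x' => st a (shiftc a b c) x' end.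

Definition Inv (R : realType) (a : nat -> R) (c : nat -> R) : Prop :=
  forall k, 0 <= c k /\ c k + \sum_(i < k.+1) a i <= 1.

Definition monob (R : realType) (g : seq bool -> R) : Prop :=
  forall x y, g (x ++ false :: y) <= g (x ++ true :: y).

Lemma Inv_shift (R : realType) (a : nat -> R) c b :
  (forall i, 0 <= a i) -> Inv a c -> Inv a (shiftc a b c).
Proof.
move=> a0 Hc k; rewrite /shiftc; have [c0 c1] := Hc k.+1.
move: c1; rewrite big_ord_recr /= => c1.
case: b; split.
- by apply: addr_ge0.
- by move: c1; lra.
- by rewrite addr0.
- have := a0 k.+1; move: c1; rewrite addr0; lra.
Qed.

Lemma Inv_st (R : realType) (a : nat -> R) x : forall c,
  (forall i, 0 <= a i) -> Inv a c -> Inv a (st a c x).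
Proof.
elim: x => [//|b x IH] c a0 Hc /=; apply: IH => //; exact: Inv_shift.
Qed.

Lemma Inv_lam (R : realType) (a : nat -> R) c :
  (forall i, 0 <= a i) -> Inv a c -> 0 <= a 0%N + c 0%N <= 1.
Proof.
move=> a0 Hc; have [c0 c1] := Hc 0%N; move: c1; rewrite big_ord1 => c1.
apply/andP; split; first by apply: addr_ge0.
by rewrite addrC.
Qed.

Lemma V_le (R : realType) (a : nat -> R) m : forall c g h,
  (forall i, 0 <= a i) -> Inv a c ->
  (forall x, size x = m -> g x <= h x) -> V a c m g <= V a c m h.
Proof.
elim: m => [|m IH] c g h a0 Hc gh /=; first by apply: gh.
have /andP [l0 l1] := Inv_lam a0 Hc.
apply: lerD; apply: ler_wpM2l.
- by rewrite subr_ge0.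
- apply: IH => //; first exact: Inv_shift.
  by move=> x sx; apply: gh; rewrite /= sx.
- done.
- apply: IH => //; first exact: Inv_shift.
  by move=> x sx; apply: gh; rewrite /= sx.
Qed.

Lemma V_eq (R : realType) (a : nat -> R) m c g h :
  (forall i, 0 <= a i) -> Inv a c ->
  (forall x, size x = m -> g x = h x) -> V a c m g = V a c m h.
Proof.
move=> a0 Hc gh; apply/eqP; rewrite eq_le; apply/andP; split; apply: V_le => // x sx;
  by rewrite gh.
Qed.

Lemma V_mulr (R : realType) (a : nat -> R) m : forall c g k,
  V a c m (fun x => g x * k) = V a c m g * k.
Proof.
elim: m => [|m IH] c g k //=.
rewrite (IH _ (fun y => g (false :: y))) (IH _ (fun y => g (true :: y))).
ring.
Qed.

Lemma V_const (R : realType) (a : nat -> R) m : forall c k,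
  V a c m (fun _ => k) = k.
Proof.
elim: m => [|m IH] c k //=; rewrite !IH; ring.
Qed.

Lemma V_opp (R : realType) (a : nat -> R) m c g :
  V a c m (fun x => - g x) = - V a c m g.
Proof.
have := V_mulr a m c g (-1); rewrite mulrN1 => <-.
by congr V; apply: funext => x; rewrite mulrN1.
Qed.

Lemma V_pos (R : realType) (a : nat -> R) m : forall c g,
  (forall i, 0 <= a i) -> Inv a c ->
  (forall x, size x = m -> 0 < g x) -> 0 < V a c m g.
Proof.
elim: m => [|m IH] c g a0 Hc gp /=; first by apply: gp.
have /andP [l0 l1] := Inv_lam a0 Hc.
have A : 0 < V a (shiftc a false c) m (fun y => g (false :: y)).
  apply: IH => //; first exact: Inv_shift.
  by move=> x sx; apply: gp; rewrite /= sx.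
have B : 0 < V a (shiftc a true c) m (fun y => g (true :: y)).
  apply: IH => //; first exact: Inv_shift.
  by move=> x sx; apply: gp; rewrite /= sx.
set l := a 0%N + c 0%N in l0 l1 *.
set u := V _ _ _ _ in A *; set v := V _ _ _ _ in B *.
have [->|lp] := eqVneq l 0; first by rewrite subr0 mul1r mul0r addr0.
have lp' : 0 < l by rewrite lt_def lp l0.
by apply: ltr_wpDl; [apply: mulr_ge0 => //; [rewrite subr_ge0 | apply: ltW] | apply: mulr_gt0].
Qed.

Lemma V_mono_c (R : realType) (a : nat -> R) m : forall c c' g,
  (forall i, 0 <= a i) -> Inv a c -> Inv a c' -> (forall k, c k <= c' k) ->
  monob g -> V a c m g <= V a c' m g.
Proof.
elim: m => [|m IH] c c' g a0 Hc Hc' cc' mg //=.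
have /andP [l0 l1] := Inv_lam a0 Hc.
have /andP [l0' l1'] := Inv_lam a0 Hc'.
have sh : forall b, (forall k, shiftc a b c k <= shiftc a b c' k).
  by move=> b k; rewrite /shiftc lerD2r.
have mg0 : monob (fun y => g (false :: y)) by move=> x y; exact: (mg (false :: x)).
have mg1 : monob (fun y => g (true :: y)) by move=> x y; exact: (mg (true :: x)).
set A := V a (shiftc a false c) m _.
set B := V a (shiftc a true c) m _.
set A' := V a (shiftc a false c') m _.
set B' := V a (shiftc a true c') m _.
have AA : A <= A' by apply: IH => //; exact: Inv_shift.
have BB : B <= B' by apply: IH => //; exact: Inv_shift.
have AB' : A' <= B'.
  apply: (@le_trans _ _ (V a (shiftc a true c') m (fun y => g (false :: y)))).
    apply: IH => //; try exact: Inv_shift.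
    by move=> k; rewrite /shiftc lerD2l.
  apply: V_le => //; first exact: Inv_shift.
  by move=> x _; exact: (mg [::]).
have ll : a 0%N + c 0%N <= a 0%N + c' 0%N by rewrite lerD2l.
set l := a 0%N + c 0%N in l0 l1 ll *.
set l' := a 0%N + c' 0%N in l0' l1' ll *.
apply: (@le_trans _ _ ((1 - l) * A' + l * B')).
  apply: lerD; apply: ler_wpM2l => //; by rewrite subr_ge0.
have : l * (B' - A') <= l' * (B' - A') by apply: ler_wpM2r; rewrite ?subr_ge0.
lra.
Qed.

Lemma V_split (R : realType) (a : nat -> R) n : forall m c g,
  V a c (n + m) g = V a c n (fun x => V a (st a c x) m (fun y => g (x ++ y))).
Proof.
elim: n => [|n IH] m c g //=.
by rewrite !IH.
Qed.

Lemma st_formula (R : realType) (a : nat -> R) x : forall c k,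
  st a c x k = c (k + size x)%N + \sum_(j < size x) a (size x + k - j)%N * (nth false x j)%:R.
Proof.
elim: x => [|b x IH] c k /=; first by rewrite addn0 big_ord0 addr0.
rewrite IH big_ord_recl /= /shiftc addnS.
have -> : ((size x).+1 + k - 0 = (k + size x).+1)%N by rewrite subn0 addSn addnC.
rewrite -!addrA; congr (_ + _); congr (_ + _).
  by case: b; rewrite ?mulr1 ?mulr0.
Qed.
Lemma super_mul (R : realType) (f : nat -> R) K :
  (forall n, 0 <= f n) -> (forall n m, f n + f m <= f (n+m)%N) ->
  forall q, q%:R * f K <= f (q * K)%N.
Proof.
move=> f0 fs; elim=> [|q IH]; first by rewrite mul0r.
rewrite -[q.+1]addn1 natrD mulrDl mul1r mulnDl mul1n addrC addnC.
by apply: le_trans (fs _ _); rewrite lerD2l.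
Qed.

Lemma fekete (R : realType) (f : nat -> R) (C : R) :
  (forall n, 0 <= f n) -> (forall n m, f n + f m <= f (n+m)%N) ->
  (forall n, f n <= C * n%:R) ->
  exists L : R, (fun n => f n / n%:R) @ \oo --> L.
Proof.
move=> f0 fs fC.
set S := [set f n.+1 / n.+1%:R | n in [set: nat]].
have hS : has_sup S.
  split; first by exists (f 1%N / 1%:R); exists 0%N.
  exists C => _ [n _ <-]; rewrite ler_pdivrMr ?ltr0Sn //.
exists (sup S); apply/cvgrPdist_le => e e0.
have e20 : 0 < e / 2 by rewrite divr_gt0.
have [_ [K _ <-] Ky] := sup_adherent e20 hS.
set K1 := K.+1 in Ky *.
set N := (Num.bound (f K1 / (e / 2))).+1.
have hN : f K1 / (e / 2) < N%:R.
  apply: lt_le_trans (archi_boundP _) _; first by rewrite divr_ge0 // ltW.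
  by rewrite ler_nat.
exists N => // n /= nN.
have n0 : (0 < n)%N by apply: leq_trans nN.
have nR : 0 < n%:R :> R by rewrite ltr0n.
have Nn : N%:R <= n%:R :> R by rewrite ler_nat.
have ub : f n / n%:R <= sup S.
  apply: sup_upper_bound => //; exists n.-1 => //; by rewrite prednK.
rewrite ger0_norm ?subr_ge0 //.
have K1R : 0 < K1%:R :> R by rewrite ltr0n.
set q := (n %/ K1)%N.
have hq : q%:R * f K1 <= f n.
  rewrite (divn_eq n K1) -/q.
  apply: le_trans (@super_mul _ f K1 f0 fs q) _.
  apply: le_trans (fs _ _); by rewrite lerDl.
have hn : n%:R < (q.+1)%:R * K1%:R :> R by rewrite -natrM ltr_nat ltn_ceil.
set y := f K1 / K1%:R in Ky *.
have fy : f K1 = y * K1%:R by rewrite /y divfK // gt_eqF.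
have y0 : 0 <= y by rewrite divr_ge0 // ltW.
have hN' : f K1 < e / 2 * N%:R by move: hN; rewrite ltr_pdivrMr // mulrC.
rewrite lerBlDl -lerBlDr ler_pdivlMr //.
rewrite -addn1 natrD in hn.
have h1 : y * n%:R <= y * ((q%:R + 1) * K1%:R) by rewrite ler_wpM2l // ltW.
have h2 : e / 2 * N%:R <= e / 2 * n%:R by rewrite ler_wpM2l // ltW.
have : y * n%:R <= f n + e / 2 * n%:R.
  apply: le_trans h1 _.
  have -> : y * ((q%:R + 1) * K1%:R) = q%:R * f K1 + f K1 by rewrite fy; ring.
  lra.
have : (sup S - e / 2) * n%:R <= y * n%:R by rewrite ler_wpM2r // ?ltW.
rewrite !mulrBl; lra.
Qed.
Fixpoint enum_bs (n : nat) : seq (seq bool) :=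
  match n with
  | 0 => [:: [::]]
  | n'.+1 => [seq rcons x b | x <- enum_bs n', b <- [:: false; true]]
  end.

Lemma enum_bs_size n x : x \in enum_bs n -> size x = n.
Proof.
elim: n x => [|n IH] x; first by rewrite inE => /eqP ->.
move=> /flatten_mapP [y /IH sy]; rewrite !inE => /orP [] /eqP ->; by rewrite size_rcons sy.
Qed.

Lemma sum_enumS (R : realType) n (F : seq bool -> R) :
  \sum_(x <- enum_bs n.+1) F x =
  \sum_(x <- enum_bs n) (F (rcons x false) + F (rcons x true)).
Proof.
rewrite /= big_flatten /= big_map; apply: eq_bigr => x _.
by rewrite big_cons big_seq1.
Qed.

Lemma cylS (T : Type) (R : realType) (xi : nat -> T -> R) n x :
  cyl xi n.+1 x = cyl xi n x `&` [set w | xi n.+1 w = (nth false x n)%:R].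
Proof.
apply/seteqP; split => w /=.
  by move=> h; split; [move=> j jn; apply: h; apply: ltnW | apply: h].
move=> [h1 h2] j; rewrite ltnS leq_eqVlt => /orP [/eqP -> //|]; exact: h1.
Qed.

Lemma cyl0 (T : Type) (R : realType) (xi : nat -> T -> R) x :
  cyl xi 0 x = setT.
Proof. by apply/seteqP; split => w //= _ j. Qed.

Lemma cyl_meas (d : measure_display) (T : measurableType d) (R : realType)
  (xi : nat -> T -> R) :
  (forall n, (0 < n)%N -> measurable_fun setT (xi n)) ->
  forall n x, measurable (cyl xi n x).
Proof.
move=> mxi; elim=> [|n IH] x; first by rewrite cyl0.
rewrite cylS; apply: measurableI => //.
have := mxi n.+1 isT measurableT [set (nth false x n)%:R] (measurable_set1 _).
by rewrite setTI.
Qed.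

Fixpoint word (T : Type) (R : realType) (xi : nat -> T -> R) (n : nat) (w : T) : seq bool :=
  match n with 0 => [::] | n'.+1 => rcons (word xi n' w) (xi n'.+1 w == 1) end.

Lemma cyl_rcons (T : Type) (R : realType) (xi : nat -> T -> R) n x b :
  size x = n -> cyl xi n (rcons x b) = cyl xi n x.
Proof.
move=> sx; apply/seteqP; split => w /= h j jn; move: (h j jn);
  by rewrite nth_rcons sx jn.
Qed.

Lemma ind_sum (T : Type) (R : realType) (xi : nat -> T -> R) :
  (forall n w, (0 < n)%N -> xi n w = 0 \/ xi n w = 1) ->
  forall n (g : seq bool -> R) w,
  \sum_(x <- enum_bs n) g x * \1_(cyl xi n x) w = g (word xi n w).
Proof.
move=> x01; elim=> [|n IH] g w.
  by rewrite /= big_seq1 cyl0 indicT /= mulr1.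
rewrite sum_enumS.
transitivity (\sum_(x <- enum_bs n)
   (g (rcons x false) * (\1_([set w | xi n.+1 w = 0]) w : R)
    + g (rcons x true) * (\1_([set w | xi n.+1 w = 1]) w : R)) * (\1_(cyl xi n x) w : R)).
  rewrite big_seq [RHS]big_seq; apply: eq_bigr => x /enum_bs_size sx.
  rewrite !cylS !cyl_rcons // !nth_rcons sx ltnn eqxx !indicI /=.
  ring.
rewrite IH /=.
have [e|e] := x01 n.+1 w isT; rewrite !indicE.
- rewrite (@mem_set _ [set w0 | xi n.+1 w0 = 0] w e) (@memNset _ [set w0 | xi n.+1 w0 = 1] w);
    last by rewrite /= e => /eqP; rewrite eq_sym oner_eq0.
  rewrite e eq_sym oner_eq0 /=; ring.
- rewrite (@mem_set _ [set w0 | xi n.+1 w0 = 1] w e) (@memNset _ [set w0 | xi n.+1 w0 = 0] w);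
    last by rewrite /= e => /eqP; rewrite oner_eq0.
  rewrite e eqxx /=; ring.
Qed.

Lemma H_word (T : Type) (R : realType) (xi : nat -> T -> R) :
  (forall n w, (0 < n)%N -> xi n w = 0 \/ xi n w = 1) ->
  forall n w, H xi n w = (count id (word xi n w))%:R.
Proof.
move=> x01; elim=> [|n IH] w; first by rewrite /H big_geq.
rewrite /H big_nat_recr //= -/(H xi n w) IH -cats1 count_cat /= natrD addn0.
congr (_ + _); have [->|->] := x01 n.+1 w isT.
  by rewrite eq_sym oner_eq0.
by rewrite eqxx.
Qed.

Lemma Inv0 (R : realType) (a : nat -> R) : dthp_kernel a -> Inv a (fun _ => 0).
Proof.
move=> [a0 [ca [la _]]] k; split => //; rewrite add0r.
have nd : nondecreasing_seq (series a).
  apply/nondecreasing_seqP => n; rewrite /series /= big_nat_recr //= lerDl.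
  exact: ltW.
have := nondecreasing_cvgn_le nd ca k.+1.
rewrite /series /= big_mkord => h; apply: le_trans h _; exact: ltW.
Qed.

Lemma cyl_prob (d : measure_display) (T : measurableType d) (R : realType)
  (P : probability T R) (a : nat -> R) (xi : nat -> T -> R) :
  dthp_kernel a -> is_DTHP P a xi ->
  forall n (g : seq bool -> R),
  \sum_(x <- enum_bs n) g x * fine (P (cyl xi n x)) = V a (fun _ => 0) n g.
Proof.
move=> hk [mxi [x01 hP]].
have a0 : forall i, 0 <= a i by move=> i; apply: ltW; case: hk => h _; exact: h.
have I0 := Inv0 hk.
have mc := cyl_meas mxi.
elim=> [|n IH] g.
  by rewrite /= big_seq1 cyl0 probability_setT /= mulr1.
rewrite sum_enumS -addn1 V_split.
transitivity (\sum_(x <- enum_bs n)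
  ((g (rcons x false) * (1 - intensity a n x) + g (rcons x true) * intensity a n x)
    * fine (P (cyl xi n x)))).
  rewrite big_seq [RHS]big_seq; apply: eq_bigr => x /enum_bs_size sx.
  rewrite !addn1 !hP // !fineM //; try exact: fin_num_measure.
  rewrite /= ; ring.
rewrite IH; apply: V_eq => // x sx /=.
rewrite !cats1 /intensity st_formula sx addn0 add0r.
ring.
Qed.

Definition Ex (R : realType) (t : R) (x : seq bool) : R := expR (t * (count id x)%:R).

Lemma E_sum (d : measure_display) (T : measurableType d) (R : realType)
  (P : probability T R) (a : nat -> R) (xi : nat -> T -> R) (t : R) :
  dthp_kernel a -> is_DTHP P a xi ->
  forall n, ('E_P[fun w => expR (t * H xi n w)])%E =
  (\sum_(x <- enum_bs n) Ex t x * fine (P (cyl xi n x)))%:E.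
Proof.
move=> hk [mxi [x01 hP]] n.
have mc := cyl_meas mxi.
rewrite unlock.
transitivity (\int[P]_w (\sum_(x <- enum_bs n) (Ex t x * \1_(cyl xi n x) w)%:E))%E.
  apply: eq_integral => w _; rewrite sumEFin ind_sum // H_word //.
rewrite ge0_integral_sum //; last 2 first.
- move=> x; apply/measurable_realfun.measurable_EFinP; apply: measurable_realfun.measurable_funM => //.
- by move=> x w _; rewrite lee_fin mulr_ge0 // ?expR_ge0.
rewrite -sumEFin; apply: eq_bigr => x _.
under eq_integral do rewrite EFinM.
rewrite ge0_integralZl //.
- rewrite integral_indic // setIT EFinM fineK //; exact: fin_num_measure.
- exact/measurable_realfun.measurable_EFinP/measurable_realfun.measurable_indic.
- by rewrite lee_fin expR_ge0.
Qed.
Lemma count_cons_cat (x y : seq bool) b :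
  count id (x ++ b :: y) = (count id x + b + count id y)%N.
Proof. by rewrite count_cat /= addnA. Qed.

Lemma Ex_mono (R : realType) (t : R) : 0 <= t -> monob (Ex t).
Proof.
move=> t0 x y; rewrite /Ex ler_expR !count_cons_cat !natrD.
by apply: ler_wpM2l => //; rewrite lerD2r lerD2l ler_nat.
Qed.

Lemma Ex_anti (R : realType) (t : R) : t <= 0 -> monob (fun x => - Ex t x).
Proof.
move=> t0 x y; rewrite lerN2 /Ex ler_expR !count_cons_cat !natrD.
by apply: ler_wnM2l => //; rewrite lerD2r lerD2l ler_nat.
Qed.

Lemma Ex_cat (R : realType) (t : R) x y : Ex t (x ++ y) = Ex t x * Ex t y.
Proof. by rewrite /Ex count_cat natrD mulrDr expRD. Qed.

Lemma Z_limit (R : realType) (a : nat -> R) (t : R) :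
  (forall i, 0 <= a i) -> Inv a (fun _ => 0) ->
  exists L : R, (fun n => ln (V a (fun _ => 0) n (Ex t)) / n%:R) @ \oo --> L.
Proof.
move=> a0 I0.
set c0 : nat -> R := fun _ => 0.
set Z := fun n => V a c0 n (Ex t).
have Zpos : forall n, 0 < Z n.
  by move=> n; apply: V_pos => // x _; exact: expR_gt0.
have Zsplit : forall n m, Z (n + m)%N = V a c0 n (fun x => V a (st a c0 x) m (Ex t) * Ex t x).
  move=> n m; rewrite /Z V_split; congr V; apply: funext => x.
  rewrite -V_mulr; congr V; apply: funext => y; by rewrite Ex_cat mulrC.
have Ist : forall x, Inv a (st a c0 x) by move=> x; exact: Inv_st.
have c0st : forall x k, c0 k <= st a c0 x k by move=> x k; case: (Ist x k).
have Zle : forall n, (forall x, size x = n -> Ex t x <= expR (`|t| * n%:R)) -> True by [].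
have bnd : forall n x, size x = n -> expR (- (`|t| * n%:R)) <= Ex t x <= expR (`|t| * n%:R).
  move=> n x sx; rewrite /Ex !ler_expR.
  have cs : (count id x <= n)%N by rewrite -sx count_size.
  have : (count id x)%:R <= n%:R :> R by rewrite ler_nat.
  have : 0 <= (count id x)%:R :> R by [].
  case: (lerP 0 t) => ht.
    rewrite ger0_norm // => h1 h2; apply/andP; split; nra.
  rewrite ltr0_norm // => h1 h2; apply/andP; split; nra.
have Zb : forall n, expR (- (`|t| * n%:R)) <= Z n <= expR (`|t| * n%:R).
  move=> n; apply/andP; split.
    rewrite -[X in X <= _](V_const a n c0); apply: V_le => // x sx.
    by case/andP: (bnd n x sx).
  rewrite -[X in _ <= X](V_const a n c0); apply: V_le => // x sx.
  by case/andP: (bnd n x sx).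
have lnb : forall n, `|ln (Z n)| <= `|t| * n%:R.
  move=> n; case/andP: (Zb n) => h1 h2.
  rewrite ler_norml; apply/andP; split.
    by rewrite -(expRK (- _)) ler_ln // posrE ?expR_gt0.
  by rewrite -(expRK (_ * _)) ler_ln // posrE ?expR_gt0.
case: (lerP 0 t) => ht.
- have Z1 : forall n, 1 <= Z n.
    move=> n; rewrite -(V_const a n c0 1); apply: V_le => // x _.
    by rewrite /Ex -expR0 ler_expR mulr_ge0.
  have sup : forall n m, Z n * Z m <= Z (n + m)%N.
    move=> n m; rewrite Zsplit /Z -V_mulr; apply: V_le => // x _.
    rewrite (mulrC (Ex t x)); apply: ler_wpM2r; first exact: ltW (expR_gt0 _).
    apply: V_mono_c => //; exact: Ex_mono.
  have [L HL] := @fekete R (fun n => ln (Z n)) `|t|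
    (fun n => ln_ge0 (Z1 n))
    (fun n m => ltac:(rewrite -lnM ?posrE // ler_ln ?posrE ?mulr_gt0 //))
    (fun n => le_trans (ler_norm _) (lnb n)).
  by exists L.
- have Z1 : forall n, Z n <= 1.
    move=> n; rewrite -(V_const a n c0 1); apply: V_le => // x _.
    by rewrite /Ex -expR0 ler_expR nmulr_rle0 // ?ltW.
  have sub : forall n m, Z (n + m)%N <= Z n * Z m.
    move=> n m; rewrite Zsplit /Z -V_mulr; apply: V_le => // x _.
    rewrite (mulrC (Ex t x)); apply: ler_wpM2r; first exact: ltW (expR_gt0 _).
    rewrite -lerN2 -!V_opp; apply: V_mono_c => //; exact: Ex_anti (ltW ht).
  have [L HL] := @fekete R (fun n => - ln (Z n)) `|t|
    (fun n => ltac:(rewrite oppr_ge0; exact: ln_le0))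
    (fun n m => ltac:(rewrite -opprD lerN2 -lnM ?posrE // ler_ln ?posrE ?mulr_gt0 //))
    (fun n => ltac:(apply: le_trans (ler_norm _) _; rewrite normrN; exact: lnb n)).
  exists (- L).
  have -> : (fun n => ln (Z n) / n%:R) = (fun n => - (- ln (Z n) / n%:R)).
    by apply: funext => n; rewrite mulNr opprK.
  exact: cvgN.
Qed.

Unset Implicit Arguments.
Theorem theorem4p5 (d : measure_display) (T : measurableType d)
  (R : realType) (P : probability T R) (a : nat -> R) (xi : nat -> T -> R) :
  dthp_kernel a -> is_DTHP P a xi ->
  exists Gamma : R -> R, forall t : R,
    (fun n : nat =>
       ln (fine ('E_P[fun w => expR (t * H xi n w)])%E) / n%:R)
      @ \oo --> Gamma t.
Proof.
move=> hk hD.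
have a0 : forall i, 0 <= a i by move=> i; apply: ltW; case: hk => h _; exact: h.
suff hh : forall t : R, exists L : R, (fun n : nat =>
       ln (fine ('E_P[fun w => expR (t * H xi n w)])%E) / n%:R) @ \oo --> L.
  by have [G HG] := choice hh; exists G.
move=> t.
have [L HL] := Z_limit t a0 (Inv0 hk).
exists L.
have -> : (fun n : nat => ln (fine ('E_P[fun w => expR (t * H xi n w)])%E) / n%:R)
  = (fun n => ln (V a (fun _ => 0) n (Ex t)) / n%:R).
  apply: funext => n; rewrite (E_sum t hk hD) /= (cyl_prob hk hD) //.
exact: HL.
Qed.
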